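(* Let $q$ be an odd prime power, $d$ a positive integer, $\varphi_d$ the coloring defined below, and let $p\ge 2$ and $T \ge 0$ be integers. Let $S\subseteq(\mathbb{F}_q^* )^d$ be a set of $p$ vectors with a leftover structure under $\varphi_d$. If $T\ge 1$, suppose further that $a_1,\dots,a_T\in(\mathbb{F}_q^* )^d$ (distinct, and not in $S$) and $\alpha_1,\dots,\alpha_T\in C_d$ satisfy $\varphi_d(a_i,a_j) = \alpha_i$ for all $1\le i<j\le T$ and $\varphi_d(a_i,s) = \alpha_i$ for all $1 \le i\le T$ and all $s\in S$. Then there is a sequence of positive integers $x_1,\dots,x_t$ with $\sum_{i=1}^t x_i = p-1$ such that, writing $s_1 = 0$ and $s_i = \sum_{j=1}^{i-1} x_j$ for $i \ge 2$, for every $i=1,\dots,t$: (1) $1\le x_i \le \lfloor (p-s_i)/2\rfloor$; (2) $\lceil\log_2 x_i\rceil + \lceil \log_2(p-s_i-x_i)\rceil \le d-1$; (3) $\lceil \log_2(p-s_i-x_i)\rceil \le d - i - T$.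
   Context: $\mathbb{F}_q^*$ is the set of nonzero elements of $\mathbb{F}_q$, endowed with an arbitrary fixed linear order; $(\mathbb{F}_q^* )^d$ is ordered lexicographically with respect to it. Let $C_d = \mathrm{DOT} \sqcup \mathrm{ZERO}\sqcup\mathrm{UP}\sqcup\mathrm{DOWN}$, where $\mathrm{DOT} = \mathbb{F}_q^*$ and ZERO, UP, DOWN are three disjoint copies of $\{1,\dots,d\}\times \mathbb{F}_q$. For distinct $x<y$ in $(\mathbb{F}_q^* )^d$, let $i$ be the first coordinate where $x$ and $y$ differ, and $x\cdot y$ the standard dot product; $\varphi_d(x,y)=\varphi_d(y,x)$ is $(i,x_i+y_i)$ in ZERO if $x\cdot y=0$; $(i,x_i+y_i)$ in UP if $x\cdot y\ne 0$ and $x\cdot y=x\cdot x$; $(i,x_i+y_i)$ in DOWN if $x\cdot y\notin\{0,x\cdot x\}$ and $x\cdot y=y\cdot y$; and $x\cdot y\in\mathrm{DOT}$ otherwise. For a vertex set $A$, $\varphi_d(A)$ is the set of colors on pairs inside $A$. $S$ has a leftover structure under $\varphi_d$ if $|S|=1$, or $S$ has a partition $S=A\cup B$ into nonempty sets such that $A$ and $B$ each have a leftover structure, $\varphi_d(A)\cap\varphi_d(B)=\emptyset$, and there is a color $\gamma$ with $\varphi_d(a,b)=\gamma$ for all $a\in A$, $b\in B$ and $\gamma\notin\varphi_d(A)\cup\varphi_d(B)$. *)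

(* Defs.v *)
From HB Require Import structures.
From mathcomp Require Import all_boot all_order all_algebra all_field.
Set Implicit Arguments. Unset Strict Implicit. Unset Printing Implicit Defensive.
Import GRing.Theory.
Local Open Scope ring_scope.

(* Vectors of F^d, represented as finite functions 'I_d -> F.
   Vertex set (F_q^* )^d = vectors with all coordinates nonzero. *)
Definition vec (F : finFieldType) (d : nat) := {ffun 'I_d -> F}.

Definition nzvec (F : finFieldType) (d : nat) (x : vec F d) : bool :=
  [forall i, x i != 0].

Definition dotp (F : finFieldType) (d : nat) (x y : vec F d) : F :=
  \sum_(i < d) x i * y i.

(* The color set C_d = DOT ⊔ ZERO ⊔ UP ⊔ DOWN, DOT = F^*,
   ZERO, UP, DOWN = copies of {1..d} x F (indices 0-based here). *)
Inductive color (F : Type) (d : nat) : Type :=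
| CDot of F
| CZero of 'I_d & F
| CUp of 'I_d & F
| CDown of 'I_d & F.

Definition first_diff (F : finFieldType) (d : nat) (x y : vec F d) : option 'I_d :=
  [pick i : 'I_d | (x i != y i) && [forall j : 'I_d, (j < i)%N ==> (x j == y j)]].

(* The fixed linear order on F^* is given by an injective [rank : F -> nat]
   (on nonzero elements): u < v iff rank u < rank v.  The lexicographic order
   on (F^* )^d compares at the first differing coordinate. *)
Definition phi (F : finFieldType) (d : nat) (rank : F -> nat) (x y : vec F d)
  : color F d :=
  match first_diff x y with
  | None => CDot d 0 (* x = y: irrelevant *)
  | Some i =>
      let a := if (rank (x i) < rank (y i))%N then x else y in
      let b := if (rank (x i) < rank (y i))%N then y else x in
      let ab := dotp a b in
      if ab == 0 then CZero i (a i + b i)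
      else if ab == dotp a a then CUp i (a i + b i)
      else if ab == dotp b b then CDown i (a i + b i)
      else CDot d ab
  end.

Definition in_colors (F : finFieldType) (d : nat) (rank : F -> nat)
  (A : {set vec F d}) (c : color F d) : Prop :=
  exists x y, [/\ x \in A, y \in A, x != y & phi rank x y = c].

Inductive leftover (F : finFieldType) (d : nat) (rank : F -> nat)
  : {set vec F d} -> Prop :=
| leftover_single (x : vec F d) : leftover rank [set x]
| leftover_split (A B : {set vec F d}) (g : color F d) :
    A != set0 -> B != set0 -> [disjoint A & B] ->
    leftover rank A -> leftover rank B ->
    (forall c, in_colors rank A c -> ~ in_colors rank B c) ->
    (forall a b, a \in A -> b \in B -> phi rank a b = g) ->
    ~ in_colors rank A g -> ~ in_colors rank B g ->
    leftover rank (A :|: B).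

(* Main.v *)
Require Import Defs.
From HB Require Import structures.
From mathcomp Require Import all_boot all_order all_algebra all_field.
Set Implicit Arguments. Unset Strict Implicit. Unset Printing Implicit Defensive.
Import GRing.Theory.
From mathcomp Require Import zify.

Lemma ul_add m n : up_log 2 (m + n) <= (maxn (up_log 2 m) (up_log 2 n)).+1.
Proof.
apply: up_log_min => //; rewrite expnS mul2n -addnn.
apply: leq_add.
  by apply: leq_trans (@up_logP 2 m isT) _; rewrite leq_exp2l // leq_maxl.
by apply: leq_trans (@up_logP 2 n isT) _; rewrite leq_exp2l // leq_maxr.
Qed.

Definition concl d p T := exists x : seq nat,
    sumn x = p.-1 /\
    (forall k, (k < size x)%N ->
       let s := sumn (take k x) in
       let xk := nth 0%N x k in
       [/\ (1 <= xk <= (p - s)./2)%N,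
           (up_log 2 xk + up_log 2 (p - s - xk) + 1 <= d)%N
         & (up_log 2 (p - s - xk) + k.+1 + T <= d)%N]).

Lemma step d m n T : 1 <= m <= n ->
  up_log 2 m + up_log 2 n + 1 <= d -> up_log 2 n + 1 + T <= d ->
  (2 <= n -> concl d n T.+1) -> concl d (m + n) T.
Proof.
move=> /andP[m1 mn] h2 h3 IH.
have [n1|n2] := leqP n 1.
  have n1' : n = 1 by apply/eqP; rewrite eqn_leq n1; apply: leq_trans mn.
  have m1' : m = 1 by apply/eqP; rewrite eqn_leq m1 andbT -n1'.
  subst; exists [:: 1]; split => // k; rewrite ltnS leqn0 => /eqP -> /=.
  split => //.
have [x [sx hx]] := IH n2.
exists (m :: x); split.
  by rewrite /= sx; case: n n2 {mn h2 h3 IH sx hx} => // n _; rewrite addnS.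
case=> [|k] /= hk.
  rewrite subn0 addKn; split => //.
  by rewrite m1 /= -divn2 leq_divRL // muln2 -addnn leq_add2l.
have [h1 h2' h3'] := hx k hk.
rewrite subnDA addKn; split => //.
by move: h3'; rewrite !addnS addSn.
Qed.

Section Geo.
Variables (F : finFieldType) (rank : F -> nat) (d : nat).
Local Notation vec := (vec F d).
Local Open Scope ring_scope.

Lemma dotpC (x y : vec) : dotp x y = dotp y x.
Proof. by apply: eq_bigr => i _; rewrite mulrC. Qed.

Lemma first_diffP (x y : vec) i : first_diff x y = Some i ->
  x i != y i /\ forall j : 'I_d, (j < i)%N -> x j = y j.
Proof.
rewrite /first_diff; case: pickP => // j /andP[hj /forallP hf] [<-].
by split => // k hk; apply/eqP; exact: (implyP (hf k) hk).
Qed.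

Lemma first_diff_some (x y : vec) : x != y -> exists i, first_diff x y = Some i.
Proof.
move=> nxy; rewrite /first_diff; case: pickP => [i _|H]; first by exists i.
exfalso; have [i0 hi0] : exists i, x i != y i.
  apply/existsP; apply: contraR nxy; rewrite negb_exists => /forallP h.
  by apply/eqP/ffunP => i; apply/eqP; move: (h i); rewrite negbK.
case: (@arg_minnP _ i0 (fun i => x i != y i) (fun i : 'I_d => nat_of_ord i) hi0) => i hi hmin.
move: (H i); rewrite hi /=; move/negP; apply; apply/forallP => j; apply/implyP => hj.
apply: contraTT hj => hne; rewrite -leqNgt; exact: hmin.
Qed.

Lemma first_diff_sym (x y : vec) : first_diff x y = first_diff y x.
Proof.
rewrite /first_diff; apply: eq_pick => i /=; rewrite eq_sym; congr (_ && _).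
by apply: eq_forallb => j; rewrite eq_sym.
Qed.

Definition col_coord (g : color F d) : option ('I_d * F) :=
  match g with CDot _ => None | CZero i s | CUp i s | CDown i s => Some (i, s) end.

Lemma phi_coord (x y : vec) g i s : x != y -> phi rank x y = g ->
  col_coord g = Some (i, s) -> first_diff x y = Some i /\ s = x i + y i.
Proof.
move=> nxy; have [j hj] := first_diff_some nxy.
rewrite /phi hj.
move=> <-; case: (boolP (rank (x j) < rank (y j))%N) => hr;
  rewrite ?hr ?(negbTE hr) /=;
  (case: ifP => _; [|case: ifP => _; [|case: ifP => _]]) => //=;
  by case=> <- <-; split => //; rewrite addrC.
Qed.

Lemma phi_dot (x y : vec) k : x != y -> phi rank x y = CDot d k ->
  [/\ k = dotp x y, k != 0 & k != dotp x x].
Proof.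
move=> nxy; have [j hj] := first_diff_some nxy.
rewrite /phi hj; case: (boolP (rank (x j) < rank (y j))%N) => hr;
  rewrite ?hr ?(negbTE hr) /=;
  (case: ifP => h0; [|case: ifP => h1; [|case: ifP => h2]]) => //= -[<-];
  rewrite ?h0 ?h1 ?h2; split => //; try by rewrite dotpC.
all: try by rewrite ?h0 ?h1 ?h2.
all: rewrite ?dotpC ?h0 ?h1 ?h2 //.
Qed.

Lemma phi_zero (x y : vec) i s : x != y -> phi rank x y = CZero i s -> dotp x y = 0.
Proof.
move=> nxy; have [j hj] := first_diff_some nxy.
rewrite /phi hj; case: (boolP (rank (x j) < rank (y j))%N) => hr;
  rewrite ?hr ?(negbTE hr) /=;
  (case: ifP => h0; [|case: ifP => h1; [|case: ifP => h2]]) => //= _.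
- exact/eqP.
- by rewrite dotpC; apply/eqP.
Qed.

Lemma phi_up (x y : vec) i s : x != y -> phi rank x y = CUp i s ->
  if (rank (x i) < rank (y i))%N then dotp x y = dotp x x else dotp x y = dotp y y.
Proof.
move=> nxy; have [j hj] := first_diff_some nxy.
rewrite /phi hj; case: (boolP (rank (x j) < rank (y j))%N) => hr;
  rewrite ?hr ?(negbTE hr) /=;
  (case: ifP => h0; [|case: ifP => h1; [|case: ifP => h2]]) => //= -[<- _].
- by rewrite hr; apply/eqP.
- by rewrite (negbTE hr) dotpC; apply/eqP.
Qed.

Lemma phi_down (x y : vec) i s : x != y -> phi rank x y = CDown i s ->
  if (rank (x i) < rank (y i))%N then dotp x y = dotp y y else dotp x y = dotp x x.
Proof.
move=> nxy; have [j hj] := first_diff_some nxy.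
rewrite /phi hj; case: (boolP (rank (x j) < rank (y j))%N) => hr;
  rewrite ?hr ?(negbTE hr) /=;
  (case: ifP => h0; [|case: ifP => h1; [|case: ifP => h2]]) => //= -[<- _].
- by rewrite hr; apply/eqP.
- by rewrite (negbTE hr) dotpC; apply/eqP.
Qed.


Lemma phi_sym (x y : vec) : {in [pred u : F | u != 0] &, injective rank} ->
  nzvec x -> nzvec y -> phi rank x y = phi rank y x.
Proof.
move=> rinj nx ny; have [->//|nxy] := eqVneq x y.
have [j hj] := first_diff_some nxy.
have hj' : first_diff y x = Some j by rewrite first_diff_sym.
have [hne _] := first_diffP hj.
have hr : rank (x j) != rank (y j).
  apply: contra hne => /eqP h; apply/eqP; apply: rinj h.
  - by rewrite inE (forallP nx).
  - by rewrite inE (forallP ny).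
rewrite /phi hj hj'.
by case: (ltngtP (rank (x j)) (rank (y j))) hr.
Qed.

Definition rv (x : vec) : 'rV[F]_d := \row_i x i.
Definition W (X : {set vec}) : 'M[F]_d :=
  (\sum_(x in X) \sum_(y in X) <<rv x - rv y>>)%MS.

Lemma dot_mx (x y : vec) : rv x *m (rv y)^T = (dotp x y)%:M.
Proof.
apply/matrixP => i j; rewrite !ord1 !mxE /= mulr1n /dotp.
by apply: eq_bigr => k _; rewrite !mxE.
Qed.

Lemma W_gen (X : {set vec}) x y : x \in X -> y \in X -> (rv x - rv y <= W X)%MS.
Proof.
move=> hx hy; apply: (sumsmx_sup x) => //; apply: (sumsmx_sup y) => //.
by rewrite genmxE.
Qed.

Lemma W_kill (X : {set vec}) k (u : 'M[F]_(d, k)) :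
  (forall x y, x \in X -> y \in X -> (rv x - rv y) *m u = 0) ->
  (W X <= kermx u)%MS.
Proof.
move=> h; apply/sumsmx_subP => x hx; apply/sumsmx_subP => y hy.
by rewrite genmxE sub_kermx h.
Qed.

Lemma W_sub (X Y : {set vec}) : X \subset Y -> (W X <= W Y)%MS.
Proof.
move=> sXY; apply/sumsmx_subP => x hx; apply/sumsmx_subP => y hy.
by rewrite genmxE W_gen // (subsetP sXY).
Qed.

Lemma notin_W (X : {set vec}) w (v : 'rV[F]_d) :
  (forall x x', x \in X -> x' \in X -> dotp x w = dotp x' w) ->
  v *m (rv w)^T != 0 -> ~~ (v <= W X)%MS.
Proof.
move=> h hv; apply: contra hv => hvW; apply/eqP/sub_kermxP.
apply: submx_trans hvW _; apply: W_kill => x y hx hy.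
by rewrite mulmxBl !dot_mx (h x y hx hy) subrr.
Qed.

Lemma rank_up (Y Z : {set vec}) (v : 'rV[F]_d) : (W Y <= W Z)%MS -> (v <= W Z)%MS ->
  ~~ (v <= W Y)%MS -> (\rank (W Y) < \rank (W Z))%N.
Proof.
move=> sYZ vZ vY.
have h1 : (W Y < W Y + v)%MS.
  by rewrite ltmxE addsmxSl /=; apply: contra vY; apply: submx_trans (addsmxSr _ _).
apply: (leq_trans (rank_ltmx h1)); apply: mxrankS.
by rewrite addsmx_sub sYZ.
Qed.

Lemma orth (X Y : {set vec}) x0 : x0 \in X ->
  (forall x y y', x \in X -> y \in Y -> y' \in Y -> dotp x y = dotp x y') ->
  ~~ (rv x0 <= W X)%MS -> (\rank (W X) + \rank (W Y) + 1 <= d)%N.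
Proof.
move=> hx0 h nx0.
pose U := (W X + rv x0)%MS.
have hU : (\rank (W X) < \rank U)%N.
  have h1 : (W X < U)%MS.
    rewrite ltmxE addsmxSl /=; apply: contra nx0; exact: submx_trans (addsmxSr _ _).
  exact: rank_ltmx.
have hY : (W Y <= kermx U^T)%MS.
  apply: W_kill => y y' hy hy'.
  rewrite -[_ *m U^T]trmxK trmx_mul trmxK.
  suff -> : U *m (rv y - rv y')^T = 0 by rewrite trmx0.
  apply/sub_kermxP; rewrite addsmx_sub; apply/andP; split.
    apply: W_kill => x x' hx hx'.
    by rewrite linearB /= mulmxBl !mulmxBr !dot_mx (h x y y') // (h x' y y') // !subrr.
  by rewrite sub_kermx linearB /= mulmxBr !dot_mx (h x0 y y') // subrr.
have := mxrankS hY; rewrite mxrank_ker mxrank_tr => hr.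
have := rank_leq_col U.
move: hU hr; set a := \rank (W X); set b := \rank (W Y); set c := \rank U.
move=> h1 h2 h3; rewrite addn1 -addSn; apply: leq_trans (leq_add h1 h2) _.
by rewrite subnKC.
Qed.


Definition e (i : 'I_d) : vec := [ffun k => (k == i)%:R].

Lemma dotp_e x i : dotp x (e i) = x i.
Proof.
rewrite /dotp (bigD1 i) //= big1 => [|k hk]; rewrite ffunE ?eqxx ?mulr1 ?addr0 //.
by rewrite (negbTE hk) mulr0.
Qed.

Lemma scal1_neq0 (a : F) : a != 0 -> (a%:M : 'M[F]_1) != 0.
Proof.
move=> ha; apply/eqP => /matrixP /(_ 0 0); rewrite !mxE /= mulr1n => h.
by rewrite h eqxx in ha.
Qed.

Lemma scalB (a b : F) : (a%:M - b%:M : 'M[F]_1) = (a - b)%:M.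
Proof. by rewrite raddfB. Qed.

Lemma noW_coord (X : {set vec}) i x0 : x0 \in X -> (forall x, x \in X -> x i = x0 i) ->
  x0 i != 0 -> ~~ (rv x0 <= W X)%MS.
Proof.
move=> hx0 h nz; apply: (notin_W (w := e i)).
  by move=> x x' hx hx'; rewrite !dotp_e (h x hx) (h x' hx').
by rewrite dot_mx dotp_e scal1_neq0.
Qed.

Lemma claimA (Y : {set vec}) c y0 g : c \notin Y -> y0 \in Y ->
  (forall y, y \in Y -> phi rank c y = g) -> ~~ (rv c - rv y0 <= W Y)%MS.
Proof.
move=> cY hy0 hg.
have ne y : y \in Y -> c != y by move=> hy; apply: contraNneq cY => ->.
case hc: (col_coord g) => [[i s]|].
  have hyi y : y \in Y -> y i = s - c i.
    move=> hy; have [_ ->] := phi_coord (ne y hy) (hg y hy) hc.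
    by rewrite [c i + _]addrC addrK.
  apply: (notin_W (w := e i)).
    by move=> x x' hx hx'; rewrite !dotp_e (hyi x hx) (hyi x' hx').
  rewrite mulmxBl !dot_mx !dotp_e scalB scal1_neq0 // subr_eq0.
  have [hf _] := phi_coord (ne y0 hy0) (hg y0 hy0) hc.
  by have [] := first_diffP hf.
case: g hg hc => // k hg _.
have hk y : y \in Y -> k = dotp c y /\ k != dotp c c.
  by move=> hy; have [] := phi_dot (ne y hy) (hg y hy).
apply: (notin_W (w := c)).
  move=> x x' hx hx'; rewrite dotpC (dotpC x').
  by rewrite -(hk x hx).1 -(hk x' hx').1.
rewrite mulmxBl !dot_mx scalB scal1_neq0 // subr_eq0.
by have [e1 e2] := hk y0 hy0; rewrite eq_sym (dotpC y0) -e1.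
Qed.

Lemma rank_split (A B : {set vec}) g a0 b0 : a0 \in A -> b0 \in B -> a0 \notin B ->
  (forall b, b \in B -> phi rank a0 b = g) ->
  (\rank (W B) < \rank (W (A :|: B)))%N.
Proof.
move=> ha hb hnB hg.
apply: (rank_up (v := rv a0 - rv b0)).
- by apply: W_sub; apply: subsetUr.
- by apply: W_gen; rewrite inE ?ha ?hb ?orbT.
- exact: claimA hb hg.
Qed.

Lemma claimC (A B : {set vec}) g a0 b0 : a0 \in A -> b0 \in B ->
  [disjoint A & B] -> (forall x, x \in A -> nzvec x) -> (forall x, x \in B -> nzvec x) ->
  (forall a b, a \in A -> b \in B -> phi rank a b = g) ->
  (\rank (W A) + \rank (W B) + 1 <= d)%N.
Proof.
move=> ha0 hb0 dis nA nB hg.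
have ne a b : a \in A -> b \in B -> a != b.
  move=> ha hb; apply/eqP => eab; subst b.
  by move: (disjointFr dis ha); rewrite hb.
have orthBA : (forall b a a', b \in B -> a \in A -> a' \in A -> dotp b a = dotp b a') ->
    ~~ (rv b0 <= W B)%MS -> (\rank (W A) + \rank (W B) + 1 <= d)%N.
  by move=> h1 h2; rewrite (addnC (\rank (W A))); exact: orth hb0 h1 h2.
case hc: (col_coord g) => [[i s]|]; last first.
  case: g hg hc => // k hg _.
  have hk a b : a \in A -> b \in B -> k = dotp a b /\ k != 0.
    by move=> ha hb; have [] := phi_dot (ne a b ha hb) (hg a b ha hb).
  apply: orthBA.
    by move=> b a a' hb ha ha'; rewrite dotpC (dotpC b) -(hk a b ha hb).1 -(hk a' b ha' hb).1.
  apply: (notin_W (w := a0)).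
    by move=> x x' hx hx'; rewrite dotpC (dotpC x') -(hk a0 x ha0 hx).1 -(hk a0 x' ha0 hx').1.
  rewrite dot_mx scal1_neq0 // dotpC.
  by have [<-] := hk a0 b0 ha0 hb0.
have hai a b : a \in A -> b \in B -> a i + b i = s.
  by move=> ha hb; have [_ ->] := phi_coord (ne a b ha hb) (hg a b ha hb) hc.
have hA a : a \in A -> a i = a0 i.
  by move=> ha; apply: (addIr (b0 i)); rewrite !hai.
have hB b : b \in B -> b i = b0 i.
  by move=> hb; apply: (addrI (a0 i)); rewrite !hai.
have nzA : ~~ (rv a0 <= W A)%MS.
  by apply: (noW_coord ha0 hA); exact: (forallP (nA a0 ha0)).
have nzB : ~~ (rv b0 <= W B)%MS.
  by apply: (noW_coord hb0 hB); exact: (forallP (nB b0 hb0)).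
case: g hg hc => // j s' hg [ej es]; subst j s'.
-
  have h0 a b : a \in A -> b \in B -> dotp a b = 0.
    by move=> ha hb; apply: (phi_zero (ne a b ha hb) (hg a b ha hb)).
  apply: orthBA => // b a a' hb ha ha'.
  by rewrite dotpC (dotpC b) !h0.
-
  have hu a b : a \in A -> b \in B ->
      if (rank (a0 i) < rank (b0 i))%N then dotp a b = dotp a a else dotp a b = dotp b b.
    by move=> ha hb; have := phi_up (ne a b ha hb) (hg a b ha hb); rewrite (hA a ha) (hB b hb).
  have [hr|hr] := boolP (rank (a0 i) < rank (b0 i))%N.
    have hu2 a b : a \in A -> b \in B -> dotp a b = dotp a a.
      by move=> ha hb; move: (hu a b ha hb); rewrite hr.
    apply: (orth ha0 _ nzA) => a b b' ha hb hb'.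
    by rewrite !hu2.
  have hu2 a b : a \in A -> b \in B -> dotp a b = dotp b b.
    by move=> ha hb; move: (hu a b ha hb); rewrite (negbTE hr).
  apply: orthBA => // b a a' hb ha ha'.
  by rewrite dotpC (dotpC b) !hu2.
-
  have hu a b : a \in A -> b \in B ->
      if (rank (a0 i) < rank (b0 i))%N then dotp a b = dotp b b else dotp a b = dotp a a.
    by move=> ha hb; have := phi_down (ne a b ha hb) (hg a b ha hb); rewrite (hA a ha) (hB b hb).
  have [hr|hr] := boolP (rank (a0 i) < rank (b0 i))%N.
    have hu2 a b : a \in A -> b \in B -> dotp a b = dotp b b.
      by move=> ha hb; move: (hu a b ha hb); rewrite hr.
    apply: orthBA => // b a a' hb ha ha'.
    by rewrite dotpC (dotpC b) !hu2.
  have hu2 a b : a \in A -> b \in B -> dotp a b = dotp a a.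
    by move=> ha hb; move: (hu a b ha hb); rewrite (negbTE hr).
  apply: (orth ha0 _ nzA) => a b b' ha hb hb'.
  by rewrite !hu2.
Qed.


Hypothesis rinj : {in [pred u : F | u != 0] &, injective rank}.

Lemma split_facts (A B : {set vec}) g :
  A != set0 -> B != set0 -> [disjoint A & B] ->
  (forall x, x \in A :|: B -> nzvec x) ->
  (forall a b, a \in A -> b \in B -> phi rank a b = g) ->
  [/\ #|A :|: B| = (#|A| + #|B|)%N,
      (\rank (W A) < \rank (W (A :|: B)))%N,
      (\rank (W B) < \rank (W (A :|: B)))%N &
      (\rank (W A) + \rank (W B) + 1 <= d)%N].
Proof.
move=> /set0Pn[a0 ha0] /set0Pn[b0 hb0] dis nz hg.
have nA x : x \in A -> nzvec x by move=> hx; apply: nz; rewrite inE hx.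
have nB x : x \in B -> nzvec x by move=> hx; apply: nz; rewrite inE hx orbT.
have a0B : a0 \notin B by rewrite (disjointFr dis ha0).
have b0A : b0 \notin A by apply/negP => hb; move: (disjointFr dis hb); rewrite hb0.
split => //.
- by rewrite cardsU (disjoint_setI0 dis) cards0 subn0.
- rewrite setUC; apply: (rank_split hb0 ha0 b0A (g := g)) => a ha.
  by rewrite phi_sym //; [apply: hg | apply: nB | apply: nA].
- by apply: (rank_split ha0 hb0 a0B (g := g)) => b hb; apply: hg.
- exact: (claimC ha0 hb0 dis nA nB hg).
Qed.

Lemma ul_rank (S : {set vec}) : leftover rank S -> (forall x, x \in S -> nzvec x) ->
  (up_log 2 #|S| <= \rank (W S))%N.
Proof.
elim=> [x|A B g nA nB dis lA IHA lB IHB _ hg _ _] nz.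
  by rewrite cards1 up_log1.
have [hc rA rB _] := split_facts nA nB dis nz hg.
have nzA x : x \in A -> nzvec x by move=> hx; apply: nz; rewrite inE hx.
have nzB x : x \in B -> nzvec x by move=> hx; apply: nz; rewrite inE hx orbT.
rewrite hc; apply: leq_trans (ul_add _ _) _.
by rewrite gtn_max (leq_ltn_trans (IHA nzA) rA) (leq_ltn_trans (IHB nzB) rB).
Qed.


Lemma main (S : {set vec}) : leftover rank S -> (forall x, x \in S -> nzvec x) ->
  forall T, (2 <= #|S|)%N -> (\rank (W S) + T <= d)%N -> concl d #|S| T.
Proof.
elim=> [x|A B g nA nB dis lA IHA lB IHB _ hg _ _] nz T.
  by rewrite cards1.
have [hc rA rB hC] := split_facts nA nB dis nz hg.
have nzA x : x \in A -> nzvec x by move=> hx; apply: nz; rewrite inE hx.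
have nzB x : x \in B -> nzvec x by move=> hx; apply: nz; rewrite inE hx orbT.
have uA := ul_rank lA nzA; have uB := ul_rank lB nzB.
have A1 : (0 < #|A|)%N by rewrite card_gt0.
have B1 : (0 < #|B|)%N by rewrite card_gt0.
move=> _ hT; rewrite hc.
case: (leqP #|A| #|B|) => hab.
  apply: step; first by rewrite A1 hab.
  - by lia.
  - by lia.
  move=> hB2; apply: IHB => //; lia.
rewrite addnC; apply: step; first by rewrite B1 ltnW.
- by lia.
- by lia.
move=> hA2; apply: IHA => //; lia.
Qed.

Definition Ych (S : {set vec}) T (a : 'I_T -> vec) n : {set vec} :=
  S :|: [set x | [exists j : 'I_T, (T - n <= j)%N && (x == a j)]].

Lemma chain (S : {set vec}) T (a : 'I_T -> vec) (alpha : 'I_T -> color F d) s0 :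
  s0 \in S -> injective a -> (forall i, a i \notin S) ->
  (forall i j : 'I_T, (i < j)%N -> phi rank (a i) (a j) = alpha i) ->
  (forall i s, s \in S -> phi rank (a i) s = alpha i) ->
  forall n, (n <= T)%N -> (\rank (W S) + n <= \rank (W (Ych S a n)))%N.
Proof.
move=> hs0 ainj aS hij hiS; elim=> [|n IH] hn.
  by rewrite addn0; apply: mxrankS; apply: W_sub; apply: subsetUl.
have hlt : (T - n.+1 < T)%N by lia.
pose i := Ordinal hlt.
have sub : Ych S a n \subset Ych S a n.+1.
  apply/subsetP => x; rewrite /Ych !inE => /orP[->//|/existsP[j /andP[hj hx]]].
  by apply/orP; right; apply/existsP; exists j; rewrite hx andbT; lia.
have aiY : a i \in Ych S a n.+1.
  by rewrite /Ych !inE; apply/orP; right; apply/existsP; exists i; rewrite eqxx andbT /=.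
have s0Y : s0 \in Ych S a n by rewrite /Ych inE hs0.
have hr : (\rank (W (Ych S a n)) < \rank (W (Ych S a n.+1)))%N.
  apply: (rank_up (v := rv (a i) - rv s0)).
  - exact: W_sub.
  - by apply: W_gen => //; apply: (subsetP sub).
  - apply: (claimA (g := alpha i)) => //.
      rewrite /Ych !inE negb_or aS /=; apply/existsP => -[j /andP[hj /eqP /ainj ij]].
      by move: hj; rewrite -ij /=; lia.
    move=> y; rewrite /Ych !inE => /orP[hy|/existsP[j /andP[hj /eqP ->]]]; first exact: hiS.
    by apply: hij => /=; lia.
have := IH (ltnW hn); lia.
Qed.
End Geo.

Theorem lemma3p11 (F : finFieldType) (rank : F -> nat) (d p T : nat)
  (S : {set vec F d}) (a : 'I_T -> vec F d) (alpha : 'I_T -> color F d) :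
  odd #|F| ->
  {in [pred u : F | u != 0%R] &, injective rank} ->
  (0 < d)%N -> (2 <= p)%N ->
  (forall s, s \in S -> nzvec s) ->
  #|S| = p ->
  leftover rank S ->
  (forall i, nzvec (a i)) ->
  injective a ->
  (forall i, a i \notin S) ->
  (forall i j : 'I_T, (i < j)%N -> phi rank (a i) (a j) = alpha i) ->
  (forall i s, s \in S -> phi rank (a i) s = alpha i) ->
  exists x : seq nat,
    sumn x = p.-1 /\
    (forall k, (k < size x)%N ->
       let s := sumn (take k x) in
       let xk := nth 0%N x k in
       [/\ (1 <= xk <= (p - s)./2)%N,
           (up_log 2 xk + up_log 2 (p - s - xk) + 1 <= d)%N
         & (up_log 2 (p - s - xk) + k.+1 + T <= d)%N]).
Proof.
move=> _ rinj _ hp nzS hS lS _ ainj aS hij hiS.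
have [s0 hs0] : exists s0, s0 \in S.
  by apply/set0Pn; rewrite -card_gt0 hS; apply: leq_trans hp.
have hc := chain hs0 ainj aS hij hiS (leqnn T).
have hd := rank_leq_col (W (Ych S a T)).
have := main rinj lS nzS (T := T); rewrite hS => h.
have [x hx] := h hp (leq_trans hc hd).
by exists x.
Qed.
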